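(* Let $\{A^i\}_{i=1}^N$ be complex $2n\times2n$ matrices. Suppose there are unitaries $W,\tilde W\in\mathrm U(2n)$ and tuples $\{B^i\}_i,\{\tilde B^i\}_i$ of complex $n\times n$ matrices such that $A^i=W(\sigma_x^{|i|}\otimes B^i)W^\dagger=\tilde W(\sigma_x^{|i|}\otimes\tilde B^i)\tilde W^\dagger$ for all $i$, and such that for each of the tuples $\{B^i\}$ and $\{\tilde B^i\}$ both the span of all products of even total parity (products $B^{i_1}\cdots B^{i_l}$ with $l\in\mathbb N$ arbitrary and $\sum_k|i_k|$ even) and the span of all products of odd total parity equal $\mathrm M_n(\mathbb C)$. Then $\tilde W(\sigma_x\otimes1_n)\tilde W^\dagger=\pm\,W(\sigma_x\otimes1_n)W^\dagger$.
   Context: $i\mapsto|i|\in\{0,1\}$ is a fixed parity function on $\{1,\dots,N\}$; $\sigma_x$ is the Pauli $x$-matrix. The matrix $u=W(\sigma_x\otimes1_n)W^\dagger$ is called the Wall matrix of the graded irreducible fMPS $\{A^i\}$ with Wall invariant $(-)$. *)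

(* Defs.v *)
From mathcomp Require Import all_boot all_order all_algebra.
From mathcomp Require Export mxtens.
From mathcomp Require spectral.
Set Implicit Arguments. Unset Strict Implicit. Unset Printing Implicit Defensive.
Import Order.TTheory GRing.Theory Num.Theory.
Local Open Scope ring_scope.

(* C is an arbitrary numClosedFieldType (e.g. the complex numbers), with
   complex conjugation Num.conj. *)

Definition adjmx {C : numClosedFieldType} {m n : nat} (A : 'M[C]_(m, n)) : 'M[C]_(n, m) :=
  (map_mx Num.conj A)^T.

(* Unitarity: we use the library notion spectral.unitarymx
   (X *m X ^t* == 1%:M), which for square matrices is U U^dagger = 1. *)

Definition sigma_x {C : numClosedFieldType} : 'M[C]_2 :=
  \matrix_(i < 2, j < 2) (i != j)%:R.

Definition sigma_x_pow {C : numClosedFieldType} (b : bool) : 'M[C]_2 :=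
  if b then sigma_x else 1%:M.

Definition word_parity {N : nat} (par : 'I_N -> bool) (w : seq 'I_N) : bool :=
  odd (count par w).

Definition word_prod {C : numClosedFieldType} {N n : nat}
  (B : 'I_N -> 'M[C]_n) (w : seq 'I_N) : 'M[C]_n :=
  foldr (fun i M => B i *m M) 1%:M w.

(* The linear span of all products of total parity p equals M_n(C):
   every matrix is a finite linear combination of such products. *)
Definition parity_span_full {C : numClosedFieldType} {N n : nat}
  (par : 'I_N -> bool) (B : 'I_N -> 'M[C]_n) (p : bool) : Prop :=
  forall M : 'M[C]_n, exists cw : seq (C * seq 'I_N),
    all (fun x => word_parity par x.2 == p) cw /\
    M = \sum_(x <- cw) x.1 *: word_prod B x.2.

(* Main.v *)
Require Import Defs.
From mathcomp Require Import all_boot all_order all_algebra.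
Import GRing.Theory Num.Theory.
Local Open Scope ring_scope.

Section H.
Variable C : numClosedFieldType.

Lemma adj_unit k (W : 'M[C]_k) : W \is spectral.unitarymx ->
  W *m adjmx W = 1%:M /\ adjmx W *m W = 1%:M.
Proof.
move/spectral.unitarymxP => H.
have H1 : W *m adjmx W = 1%:M by rewrite /adjmx map_trmx.
by split=> //; apply: mulmx1C.
Qed.

Lemma conj_mul k (W S T : 'M[C]_k) : adjmx W *m W = 1%:M ->
  W *m S *m adjmx W *m (W *m T *m adjmx W) = W *m (S *m T) *m adjmx W.
Proof.
move=> H; by rewrite !mulmxA -[W *m S *m adjmx W *m W]mulmxA H mulmx1.
Qed.

Lemma tensmxDr {a b c d} (S : 'M[C]_(a,b)) (M1 M2 : 'M[C]_(c,d)) :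
  S *t (M1 + M2) = S *t M1 + S *t M2.
Proof. by apply/matrixP=> i j; rewrite !mxE mulrDr. Qed.

Lemma tensmxZr {a b c d} (S : 'M[C]_(a,b)) x (M1 : 'M[C]_(c,d)) :
  S *t (x *: M1) = x *: (S *t M1).
Proof. by apply/matrixP=> i j; rewrite !mxE mulrCA. Qed.

Lemma tens11 a b : (1%:M : 'M[C]_a) *t (1%:M : 'M[C]_b) = 1%:M.
Proof.
apply/matrixP=> i j.
case: (mxtens_indexP i)=> i0 i1; case: (mxtens_indexP j)=> j0 j1.
rewrite tensmxE !mxE (inj_eq (can_inj (@mxtens_indexK a b))) xpair_eqE.
by case: (i0 == j0); case: (i1 == j1); rewrite ?mulr1 ?mulr0 ?mul0r.
Qed.

Lemma sx2 : (sigma_x : 'M[C]_2) *m sigma_x = 1%:M.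
Proof.
apply/matrixP=> i j; rewrite !mxE big_ord_recr big_ord1 /= !mxE.
by case: i => [[|[|//]] ?]; case: j => [[|[|//]] ?]; rewrite /= ?mulr0 ?mulr1 ?addr0 ?add0r.
Qed.

Lemma sxp_mul p q : (sigma_x_pow p : 'M[C]_2) *m sigma_x_pow q = sigma_x_pow (p (+) q).
Proof. by case: p; case: q; rewrite /= ?mul1mx ?mulmx1 ?sx2. Qed.

Lemma mul_mx_deltaE k (K : 'M[C]_k) (i j a b : 'I_k) :
  (K *m delta_mx i j) a b = K a i * (j == b)%:R.
Proof.
rewrite mxE (bigD1 i) //= big1 ?addr0 => [|l /negbTE nl]; rewrite !mxE ?eqxx ?nl //=;
  [by rewrite eq_sym | by rewrite mulr0].
Qed.

Lemma mul_delta_mxE k (K : 'M[C]_k) (i j a b : 'I_k) :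
  (delta_mx i j *m K) a b = (a == i)%:R * K j b.
Proof.
rewrite mxE (bigD1 j) //= big1 ?addr0 => [|l /negbTE nl]; rewrite !mxE ?eqxx ?nl //=;
  [by rewrite andbT | by rewrite andbF mul0r].
Qed.

Lemma comm_scalar k (K : 'M[C]_k.+1) :
  (forall M, K *m M = M *m K) -> K = (K 0 0)%:M.
Proof.
move=> H; apply/matrixP=> x y; rewrite mxE.
have := congr1 (fun M : 'M[C]_k.+1 => M x y) (H (delta_mx x x)).
rewrite mul_mx_deltaE mul_delta_mxE eqxx mul1r => <-.
have := congr1 (fun M : 'M[C]_k.+1 => M 0 x) (H (delta_mx 0 x)).
rewrite mul_mx_deltaE mul_delta_mxE !eqxx mul1r mulr1 => ->.
by rewrite mulr_natr.
Qed.


Lemma sx_comm q : (sigma_x : 'M[C]_2) *m sigma_x_pow q = sigma_x_pow q *m sigma_x.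
Proof. by case: q; rewrite /= ?mul1mx ?mulmx1. Qed.

Lemma conj_cancel k (W X Y : 'M[C]_k) : adjmx W *m W = 1%:M ->
  W *m X *m adjmx W = W *m Y *m adjmx W -> X = Y.
Proof.
move=> H /(congr1 (fun Z => adjmx W *m Z *m W)).
by rewrite !mulmxA H !mul1mx -!mulmxA H !mulmx1.
Qed.

Lemma tens_cancel n (X Y : 'M[C]_n) : sigma_x *t X = sigma_x *t Y -> X = Y.
Proof.
move=> H; apply/matrixP=> i j.
have := congr1 (fun Z : 'M[C]_(2 * n) => Z (mxtens_index ((0 : 'I_2), i)) (mxtens_index ((1 : 'I_2), j))) H.
by rewrite /= !tensmxE !mxE /= !mul1r.
Qed.

Lemma word_rep N n (par : 'I_N -> bool) (A : 'I_N -> 'M[C]_(2*n)) (W : 'M[C]_(2*n)) (B : 'I_N -> 'M[C]_n) :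
  adjmx W *m W = 1%:M -> W *m adjmx W = 1%:M ->
  (forall i, A i = W *m (sigma_x_pow (par i) *t B i) *m adjmx W) ->
  forall w, word_prod A w =
    W *m (sigma_x_pow (word_parity par w) *t word_prod B w) *m adjmx W.
Proof.
move=> H1 H2 HA; elim=> [|i w IH].
  by rewrite /word_prod /word_parity /= tens11 mulmx1 H2.
have -> : word_prod A (i :: w) = A i *m word_prod A w by [].
have -> : word_prod B (i :: w) = B i *m word_prod B w by [].
have -> : word_parity par (i :: w) = par i (+) word_parity par w.
  by rewrite /word_parity /= oddD oddb.
by rewrite IH HA conj_mul // tensmx_mul sxp_mul.
Qed.

Lemma combo_rep N n (par : 'I_N -> bool) (A : 'I_N -> 'M[C]_(2*n)) (W : 'M[C]_(2*n)) (B : 'I_N -> 'M[C]_n) p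
  (cw : seq (C * seq 'I_N)) :
  adjmx W *m W = 1%:M -> W *m adjmx W = 1%:M ->
  (forall i, A i = W *m (sigma_x_pow (par i) *t B i) *m adjmx W) ->
  all (fun x => word_parity par x.2 == p) cw ->
  \sum_(x <- cw) x.1 *: word_prod A x.2 =
    W *m (sigma_x_pow p *t \sum_(x <- cw) x.1 *: word_prod B x.2) *m adjmx W.
Proof.
move=> H1 H2 HA; elim: cw => [|x cw IH] /=.
  by rewrite !big_nil tensmx0 mulmx0 mul0mx.
case/andP=> /eqP hx hall.
rewrite !big_cons tensmxDr tensmxZr mulmxDr mulmxDl -scalemxAr -scalemxAl.
by rewrite (@word_rep _ _ _ _ _ _ H1 H2 HA) hx IH.
Qed.

End H.
Arguments word_rep {C N n par A W B}.
Arguments combo_rep {C N n par A W B p cw}.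
Arguments conj_cancel {C k W X Y}.
Arguments adj_unit {C k W}.
Arguments comm_scalar {C k K}.
Arguments tens_cancel {C n X Y}.

Theorem mainTheorem8 (C : numClosedFieldType) (N n : nat) (par : 'I_N -> bool)
    (A : 'I_N -> 'M[C]_(2 * n)) (W Wt : 'M[C]_(2 * n))
    (B Bt : 'I_N -> 'M[C]_n) :
  W \is spectral.unitarymx -> Wt \is spectral.unitarymx ->
  (forall i, A i = W *m (sigma_x_pow (par i) *t B i) *m adjmx W) ->
  (forall i, A i = Wt *m (sigma_x_pow (par i) *t Bt i) *m adjmx Wt) ->
  parity_span_full par B false -> parity_span_full par B true ->
  parity_span_full par Bt false -> parity_span_full par Bt true ->
  let u := W *m (sigma_x *t (1%:M : 'M[C]_n)) *m adjmx W in
  Wt *m (sigma_x *t (1%:M : 'M[C]_n)) *m adjmx Wt = u \/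
  Wt *m (sigma_x *t (1%:M : 'M[C]_n)) *m adjmx Wt = - u.
Proof.
move=> UW UWt HA HAt Be Bo Bte Bto u.
destruct n as [|n].
  by left; apply/matrixP=> -[i Hi]; exfalso; move: Hi; rewrite muln0.
have [W1 W2] := adj_unit UW; have [Wt1 Wt2] := adj_unit UWt.
have [cw [hcw h1]] := Bto 1%:M.
set K := \sum_(x <- cw) x.1 *: word_prod B x.2.
set ut := Wt *m (sigma_x *t 1%:M) *m adjmx Wt.
have Hu : ut = W *m (sigma_x *t K) *m adjmx W.
  transitivity (\sum_(x <- cw) x.1 *: word_prod A x.2).
    by rewrite (combo_rep Wt2 Wt1 HAt hcw) -h1.
  by rewrite (combo_rep W2 W1 HA hcw).
have Hc : forall w, ut *m word_prod A w = word_prod A w *m ut.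
  move=> w; rewrite /ut (word_rep Wt2 Wt1 HAt) !conj_mul // !tensmx_mul.
  by rewrite mulmx1 mul1mx sx_comm.
have Hs : forall dw : seq (C * seq 'I_N),
    ut *m (\sum_(x <- dw) x.1 *: word_prod A x.2) =
    (\sum_(x <- dw) x.1 *: word_prod A x.2) *m ut.
  move=> dw; rewrite mulmx_sumr mulmx_suml; apply: eq_bigr => x _.
  by rewrite -scalemxAr -scalemxAl Hc.
have HK : forall M, K *m M = M *m K.
  move=> M; have [dw [hdw hM]] := Be M.
  have := Hs dw; rewrite (combo_rep W2 W1 HA hdw) -hM Hu !conj_mul //.
  rewrite !tensmx_mul /= mulmx1 mul1mx => /(conj_cancel W2).
  exact: tens_cancel.
have HKs := comm_scalar HK.
set c := K 0 0 in HKs.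
have Hc2 : c ^+ 2 = 1.
  have E : ut *m ut = 1%:M.
    by rewrite /ut conj_mul // tensmx_mul sx2 mulmx1 tens11 mulmx1.
  move: E; rewrite Hu conj_mul // tensmx_mul sx2 HKs -scalar_mxM -[(c * c)%:M]scalemx1.
  rewrite tensmxZr tens11 -scalemxAr -scalemxAl mulmx1 W1.
  move/(congr1 (fun Z : 'M[C]_(2 * n.+1) => Z (mxtens_index ((0 : 'I_2), (0 : 'I_n.+1)))
                                                 (mxtens_index ((0 : 'I_2), (0 : 'I_n.+1))))).
  by rewrite !mxE eqxx mulr1 expr2.
have Hut : ut = c *: u.
  by rewrite Hu HKs -scalemx1 tensmxZr -scalemxAr -scalemxAl.
move/eqP: Hc2; rewrite sqrf_eq1 => /orP[/eqP c1|/eqP c1].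
  by left; rewrite -/ut Hut c1 scale1r.
by right; rewrite -/ut Hut c1 scaleN1r.
Qed.
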